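(* For all FDSs $A,B$, $\widetilde{A}\,\widetilde{B}=\widetilde{AB}$ (isomorphism of forests).
   Context: A finite dynamical system (FDS) is a function $A:S_A\to S_A$ on a finite set; the product $AB$ acts on $S_A\times S_B$ by $(a,b)\mapsto(A(a),B(b))$. Write $A^{\circ m}$ for the $m$-fold iterate of $A$; a state $s$ is a cycle state if $A^{\circ m}(s)=s$ for some $m>0$. The unrolling $\widetilde{A}$ is the forest with vertex set $\{(s,k)\in S_A\times\mathbb{N}: A^{\circ k}(s)\text{ is a cycle state}\}$ and an arc $(s,k)\to(A(s),k-1)$ for each such vertex with $k\ge1$; the roots are the vertices $(a,0)$. A forest is a disjoint union of rooted in-trees (arcs towards the root); the depth of a vertex is its distance to the root of its tree. The product of forests $\mathbf{F},\mathbf{G}$ has vertex set $\{(x,y):x\in\mathbf{F},y\in\mathbf{G},\operatorname{depth}(x)=\operatorname{depth}(y)\}$ and an arc $(x,y)\to(x',y')$ whenever $x\to x'$ and $y\to y'$ are arcs of $\mathbf{F}$ and $\mathbf{G}$. *)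

(* Defs.v *)
From mathcomp Require Import all_boot.
Set Implicit Arguments. Unset Strict Implicit. Unset Printing Implicit Defensive.

(* A finite dynamical system is a function A : T -> T on a finType T. *)

Definition cycle_state (T : Type) (A : T -> T) (s : T) : Prop :=
  exists m, 0 < m /\ iter m A s = s.

Definition fds_prod (TA TB : Type) (A : TA -> TA) (B : TB -> TB) :
  TA * TB -> TA * TB := fun p => (A p.1, B p.2).

(* A (possibly infinite) directed graph given by a carrier type, a vertex
   predicate and an arc relation; forests are such graphs whose arcs point
   towards the roots. *)
Record forest := Forest {
  fV : Type;
  fvert : fV -> Prop;
  farc : fV -> fV -> Prop }.

Definition is_root (F : forest) (x : fV F) : Prop :=
  fvert x /\ ~ (exists y, fvert y /\ farc x y).

Inductive depth (F : forest) : fV F -> nat -> Prop :=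
| depth0 x : is_root x -> depth x 0
| depthS x y n : fvert x -> fvert y -> farc x y -> depth y n -> depth x n.+1.

Definition forest_prod (F G : forest) : forest :=
  @Forest (fV F * fV G)
    (fun p => fvert p.1 /\ fvert p.2 /\ exists n, depth p.1 n /\ depth p.2 n)
    (fun p q => farc p.1 q.1 /\ farc p.2 q.2).

Definition unroll (T : Type) (A : T -> T) : forest :=
  @Forest (T * nat)
    (fun v => cycle_state A (iter v.2 A v.1))
    (fun v w => 0 < v.2 /\ w = (A v.1, v.2.-1)).

Definition forest_iso (F G : forest) : Prop :=
  exists g : fV F -> fV G,
    [/\ (forall x, fvert x -> fvert (g x)),
        (forall x y, fvert x -> fvert y -> g x = g y -> x = y),
        (forall y, fvert y -> exists2 x, fvert x & g x = y) &
        (forall x y, fvert x -> fvert y -> (farc x y <-> farc (g x) (g y)))].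

(* Main.v *)
Require Import Defs.
From mathcomp Require Import all_boot.

Lemma iter_prod (TA TB : Type) (A : TA -> TA) (B : TB -> TB) m x y :
  iter m (fds_prod A B) (x, y) = (iter m A x, iter m B y).
Proof. by elim: m => //= m ->. Qed.

Lemma iter_mul_fix (T : Type) (f : T -> T) m k x :
  iter m f x = x -> iter (m * k) f x = x.
Proof.
move=> H; elim: k => [|k IH]; first by rewrite muln0.
by rewrite mulnS iterD IH H.
Qed.

Lemma unroll_vert_arc (T : Type) (A : T -> T) (v : T * nat) :
  0 < v.2 -> cycle_state A (iter v.2 A v.1) ->
  cycle_state A (iter (A v.1, v.2.-1).2 A (A v.1, v.2.-1).1).
Proof. case: v => s [|k] //= _. by rewrite -iterSr. Qed.

Lemma unroll_depth (T : Type) (A : T -> T) (v : T * nat) n :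
  @depth (unroll A) v n <-> (cycle_state A (iter v.2 A v.1) /\ v.2 = n).
Proof.
split.
- elim=> [x [Hx Hn]|x y m Hx Hy [Hpos ->] _ [_ IH]].
  + split=> //; case: x Hx Hn => s [|k] //= Hx Hn.
    exfalso; apply: Hn; exists (A s, k); split=> //=.
    by rewrite -iterSr.
  + split=> //; rewrite -IH /=; move: Hpos; by case: (x.2).
- case: v => s k /= [Hv <-]; elim: k s Hv => [|k IH] s Hv.
  + apply: depth0; split=> // -[y [_ [/= H _]]] //.
  + apply: (@depthS (unroll A) (s, k.+1) (A s, k)) => //=.
    * by rewrite -iterSr.
    * apply: IH; by rewrite -iterSr.
Qed.

Lemma cycle_prod (TA TB : Type) (A : TA -> TA) (B : TB -> TB) x y :
  cycle_state (fds_prod A B) (x, y) <-> cycle_state A x /\ cycle_state B y.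
Proof.
split.
- move=> [m [Hm]]; rewrite iter_prod => -[H1 H2].
  by split; exists m.
- move=> [[m1 [H1 E1]] [m2 [H2 E2]]]; exists (m1 * m2); split.
  + by rewrite muln_gt0 H1 H2.
  + rewrite iter_prod iter_mul_fix // mulnC iter_mul_fix //.
Qed.

Theorem mainTheorem14 (TA TB : finType) (A : TA -> TA) (B : TB -> TB) :
  forest_iso (forest_prod (unroll A) (unroll B)) (unroll (fds_prod A B)).
Proof.
exists (fun p : (TA * nat) * (TB * nat) => ((p.1.1, p.2.1), p.1.2)).
split.
- move=> [[a i] [b j]] /= [Ha [Hb [n [/unroll_depth [_ /= Hi] /unroll_depth [_ /= Hj]]]]].
  subst; rewrite iter_prod; exact/cycle_prod.
- move=> [[a i] [b j]] [[a' i'] [b' j']] /=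
    [_ [_ [n [/unroll_depth [_ /= Hi] /unroll_depth [_ /= Hj]]]]]
    [_ [_ [n' [/unroll_depth [_ /= Hi'] /unroll_depth [_ /= Hj']]]]] [Ea Eb Ei].
  subst; congruence.
- move=> [[a b] k] /=; rewrite iter_prod => /cycle_prod [Ha Hb].
  exists ((a, k), (b, k)) => //=; split=> //; split=> //; exists k.
  by split; apply/unroll_depth.
- move=> [[a i] [b j]] [[a' i'] [b' j']] /=
    [_ [_ [n [/unroll_depth [_ /= Hi] /unroll_depth [_ /= Hj]]]]]
    [_ [_ [n' [/unroll_depth [_ /= Hi'] /unroll_depth [_ /= Hj']]]]].
  subst; split.
  + move=> [[H1 E1] [_ E2]]; split=> //; case: E1 => -> ->; case: E2 => -> _ //=.
  + move=> [H1 E]; case: E => -> -> ->; by split.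
Qed.
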